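(* Let $K$ be a finite group, $N\trianglelefteq K$, and $H=\Delta_K(1\times N)=\{(gn,g):g\in K,n\in N\}\le K\times K$. Then every cohomology class in $H^2(H;\mathbb{T})$ contains a cocycle $\psi$ satisfying, for all $g,k\in K$ and $n,m\in N$, $$\psi((gn,g),(km,k))=\overline{\beta^{\psi}_{(k,k)}((n,1))}\,\psi((n^k,1),(m,1))\,\psi((g,g),(k,k)).$$
   Context: $n^k=k^{-1}nk$. For $\psi\in Z^2(X;\mathbb{T})$ on a group $X$, $\beta^\psi_x(y)=\psi(x,x^{-1}yx)\,\overline{\psi(y,x)}$. *)

(* Defs.v *)
(* T = unit circle of an arbitrary numClosedFieldType C
   (e.g. algC); values psi x y with `|psi x y| = 1. *)
From HB Require Import structures.
From mathcomp Require Import all_boot all_order all_algebra all_fingroup all_solvable.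
Set Implicit Arguments. Unset Strict Implicit. Unset Printing Implicit Defensive.
Import Order.TTheory GRing.Theory Num.Theory.
Local Open Scope ring_scope.

Definition Delta (gT : finGroupType) (K N : {set gT}) : {set gT * gT} :=
  [set ((g * n)%g, g) | g in K, n in N].

Definition is_cocycle (C : numClosedFieldType) (aT : finGroupType)
  (H : {set aT}) (psi : aT -> aT -> C) : Prop :=
  (forall x y, x \in H -> y \in H -> `|psi x y| = 1) /\
  (forall x y z, x \in H -> y \in H -> z \in H ->
     psi x y * psi (x * y)%g z = psi x (y * z)%g * psi y z).

Definition cohomologous (C : numClosedFieldType) (aT : finGroupType)
  (H : {set aT}) (psi psi' : aT -> aT -> C) : Prop :=
  exists mu : aT -> C, (forall x, x \in H -> `|mu x| = 1) /\
    (forall x y, x \in H -> y \in H ->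
       psi' x y = psi x y * mu x * mu y / mu (x * y)%g).

(* beta^psi_x(y) = psi(x, x^-1 y x) * conj(psi(y, x)); note y ^ x = x^-1 y x *)
Definition beta (C : numClosedFieldType) (aT : finGroupType)
  (psi : aT -> aT -> C) (x y : aT) : C :=
  psi x (y ^ x)%g * (psi y x)^*.

(* Main.v *)
Require Import Defs.
From HB Require Import structures.
From mathcomp Require Import all_boot all_order all_algebra all_fingroup all_solvable.
From mathcomp Require Import ring.
Import Order.TTheory GRing.Theory Num.Theory.
Local Open Scope ring_scope.

Lemma Delta_mem (gT : finGroupType) (K N : {group gT}) g n :
  g \in K -> n \in N -> ((g * n)%g, g) \in Delta K N.
Proof. by move=> gK nN; apply/imset2P; apply: (Imset2spec gK nN). Qed.

Arguments Delta_mem {gT K N g n}.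

Lemma Delta_inv (gT : finGroupType) (K N : {group gT}) x :
  x \in Delta K N -> exists g n, [/\ g \in K, n \in N & x = ((g * n)%g, g)].
Proof. by case/imset2P=> g n gK nN ->; exists g, n. Qed.

Arguments Delta_inv {gT K N x}.

Lemma Delta_mul (gT : finGroupType) (K N : {group gT}) (nsNK : (N <| K)%g) x y :
  x \in Delta K N -> y \in Delta K N -> (x * y)%g \in Delta K N.
Proof.
move=> /Delta_inv [g [n [gK nN ->]]] /Delta_inv [k [m [kK mN ->]]].
have -> : (((g * n)%g, g) * ((k * m)%g, k))%g = ((g * k * (n ^ k * m))%g, (g * k)%g).
  by congr pair; rewrite conjgE !mulgA mulgK.
apply: Delta_mem; first by rewrite groupM.
rewrite groupM // memJ_norm //.
by case/andP: nsNK => _ /subsetP; apply.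
Qed.

Arguments Delta_mul {gT K N} nsNK {x y}.

Lemma Delta1 (gT : finGroupType) (K N : {group gT}) : (1%g : gT * gT) \in Delta K N.
Proof. by have := Delta_mem (@group1 _ K) (@group1 _ N); rewrite mulg1. Qed.

Arguments Delta1 {gT K N}.

Lemma coc_nz (C : numClosedFieldType) (aT : finGroupType) (H : {set aT}) (psi : aT -> aT -> C) x y :
  is_cocycle H psi -> x \in H -> y \in H -> psi x y != 0.
Proof. by case=> hn _ hx hy; rewrite -normr_eq0 hn ?oner_eq0. Qed.

Arguments coc_nz {C aT H psi x y}.

Lemma coc_r1 (C : numClosedFieldType) (aT : finGroupType) (H : {set aT}) (psi : aT -> aT -> C) x :
  is_cocycle H psi -> 1%g \in H -> x \in H -> psi x 1%g = psi 1%g 1%g.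
Proof.
move=> hc h1 hx; have := hc.2 x 1%g 1%g hx h1 h1; rewrite !mulg1.
by move/(mulfI (coc_nz hc hx h1)).
Qed.

Arguments coc_r1 {C aT H psi x}.

Lemma coc_l1 (C : numClosedFieldType) (aT : finGroupType) (H : {set aT}) (psi : aT -> aT -> C) x :
  is_cocycle H psi -> 1%g \in H -> x \in H -> psi 1%g x = psi 1%g 1%g.
Proof.
move=> hc h1 hx; have := hc.2 1%g 1%g x h1 h1 hx; rewrite !mul1g.
by move/(mulIf (coc_nz hc h1 hx)).
Qed.

Arguments coc_l1 {C aT H psi x}.

Lemma key (C : numClosedFieldType) (aT : finGroupType) (H : {set aT}) (psi : aT -> aT -> C)
  (dg dk n m : aT) :
  is_cocycle H psi ->
  dg \in H -> dk \in H -> n \in H -> m \in H -> (n ^ dk)%g \in H ->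
  (dk * m)%g \in H -> (n ^ dk * m)%g \in H ->
  psi dg n = 1 -> psi (dg * dk)%g (n ^ dk * m)%g = 1 -> psi dk (n ^ dk * m)%g = 1 ->
  psi dk m = 1 -> psi dk (n ^ dk)%g = 1 ->
  psi (dg * n)%g (dk * m)%g = psi dg dk * psi n dk * psi (n ^ dk)%g m.
Proof.
move=> [_ hc] hg hk hn hm hn' hkm hn'm e1 e2 e3 e4 e5.
have E1 := hc _ _ _ hg hn hkm.
have E2 := hc _ _ _ hg hk hn'm.
have E3 := hc _ _ _ hn hk hm.
have E4 := hc _ _ _ hk hn' hm.
have cC : (n * dk)%g = (dk * n ^ dk)%g by rewrite conjgC.
have cC2 : (n * (dk * m))%g = (dk * (n ^ dk * m))%g by rewrite mulgA cC -mulgA.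
rewrite e1 mul1r cC2 in E1.
rewrite e2 e3 !mulr1 in E2.
rewrite e4 mulr1 cC in E3.
rewrite e5 mul1r in E4.
by rewrite E1 -E2 -E3 E4 e3 mul1r mulrA.
Qed.

Theorem claim2 (C : numClosedFieldType) (gT : finGroupType)
  (K N : {group gT}) (nsNK : (N <| K)%g) (phi : gT * gT -> gT * gT -> C) :
  is_cocycle (Delta K N) phi ->
  exists psi : gT * gT -> gT * gT -> C,
    [/\ is_cocycle (Delta K N) psi,
        cohomologous (Delta K N) phi psi &
        forall g k n m, g \in K -> k \in K -> n \in N -> m \in N ->
          psi ((g * n)%g, g) ((k * m)%g, k) =
            (beta psi (k, k) (n, 1%g))^* * psi ((n ^ k)%g, 1%g) (m, 1%g)
              * psi (g, g) (k, k)].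
Proof.
move=> hc.
set D := Delta K N.
have h1 : (1%g : gT * gT) \in D by apply: Delta1.
set c := phi 1%g 1%g.
have c1 : `|c| = 1 by apply: hc.1.
set lam := (c ^+ 2)^-1.
have lam1 : `|lam| = 1 by rewrite normfV normrX c1 expr1n invr1.
pose mu (x : gT * gT) := lam * phi (x.2, x.2) ((x.2^-1 * x.1)%g, 1%g).
have memd g : g \in K -> (g, g) \in D.
  by move=> gK; have := Delta_mem gK (@group1 _ N); rewrite mulg1.
have meme n : n \in N -> (n, 1%g) \in D.
  by move=> nN; have := Delta_mem (@group1 _ K) nN; rewrite mul1g.
have mu1 x : x \in D -> `|mu x| = 1.
  case/Delta_inv=> g [n [gK nN ->]]; rewrite /mu /= normrM lam1 mul1r.
  by rewrite mulKg; apply: hc.1; [apply: memd | apply: meme].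
have munz x : x \in D -> mu x != 0.
  by move=> /mu1 h; rewrite -normr_eq0 h oner_eq0.
pose psi x y := phi x y * mu x * mu y / mu (x * y)%g.
have hpsi : is_cocycle D psi.
  split.
    move=> x y hx hy; rewrite /psi.
    move: (mu1 _ hx) (mu1 _ hy) (mu1 _ (Delta_mul nsNK hx hy)) (hc.1 _ _ hx hy).
    move: (mu x) (mu y) (mu (x * y)%g) (phi x y) => a b d p ha hb hd hp.
    by rewrite !normrM normfV ha hb hd hp invr1 !mulr1.
  move=> x y z hx hy hz.
  have hxy := Delta_mul nsNK hx hy; have hyz := Delta_mul nsNK hy hz.
  have hxyz := Delta_mul nsNK hxy hz.
  have nx := munz _ hx; have ny := munz _ hy; have nz := munz _ hz.
  have nxy := munz _ hxy; have nyz := munz _ hyz; have nxyz := munz _ hxyz.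
  rewrite /psi.
  transitivity (phi x y * phi (x * y)%g z * (mu x * mu y * mu z / mu (x * y * z)%g)).
    by field; apply/andP; split.
  rewrite (hc.2 x y z hx hy hz) -mulgA.
  rewrite -mulgA in nxyz.
  by field; apply/andP; split.
have van g n : g \in K -> n \in N -> psi (g, g) (n, 1%g) = 1.
  move=> gK nN.
  have hd := memd _ gK; have he := meme _ nN.
  rewrite /psi /mu /= !mulg1 mulVg invg1 !mul1g mulKg.
  rewrite -[((1%g, 1%g) : gT * gT)]/(1%g : gT * gT).
  rewrite (coc_r1 hc h1 hd) (coc_l1 hc h1 he) -/c.
  have pnz := coc_nz hc hd he.
  have cnz : c != 0 by rewrite -normr_eq0 c1 oner_eq0.
  by rewrite /lam; field; apply/andP; split.
exists psi; split => //.
  by exists mu; split.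
move=> g k n m gK kK nN mN.
have nNK : k \in 'N(N)%g by case/andP: nsNK => _ /subsetP; apply.
have nkN : (n ^ k)%g \in N by rewrite memJ_norm.
have eJ : ((n, 1%g) ^ (k, k))%g = ((n ^ k)%g, 1%g) :> gT * gT.
  by rewrite conjgE; congr pair; rewrite /= mul1g mulVg.
have -> : ((g * n)%g, g) = ((g, g) * (n, 1%g))%g :> gT * gT.
  by rewrite -[RHS]/(((g * n)%g, (g * 1)%g)) mulg1.
have -> : ((k * m)%g, k) = ((k, k) * (m, 1%g))%g :> gT * gT.
  by rewrite -[RHS]/(((k * m)%g, (k * 1)%g)) mulg1.
have eM : (((n ^ k)%g, 1%g) * (m, 1%g))%g = ((n ^ k * m)%g, 1%g) :> gT * gT.
  by rewrite -[LHS]/(((n ^ k * m)%g, (1 * 1)%g)) mulg1.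
have eD : ((g, g) * (k, k))%g = ((g * k)%g, (g * k)%g) :> gT * gT by [].
have nkmN : (n ^ k * m)%g \in N by rewrite groupM.
rewrite (@key C _ D psi (g, g) (k, k) (n, 1%g) (m, 1%g)) //.
- rewrite /beta eJ (van k (n ^ k)%g) // mul1r conjCK.
  by rewrite -mulrA mulrC.
- exact: memd.
- exact: memd.
- exact: meme.
- exact: meme.
- by rewrite eJ; apply: meme.
- by rewrite -[((k, k) * (m, 1%g))%g]/(((k * m)%g, (k * 1)%g) : gT * gT) mulg1; exact: (Delta_mem kK mN).
- by rewrite eJ eM; apply: meme.
- exact: van.
- by rewrite eD eJ eM van // groupM.
- by rewrite eJ eM van.
- exact: van.
- by rewrite eJ van.
Qed.
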